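(* Assume (B1)–(B3) and consider the NL-IAPIAL method described in the context. For every $k\ge1$ at which $p_k$ is computed, $$\mathcal L_{c_k}(z_k;p_k)\le\mathcal L_{c_k}(z_k;p_{k-1})+\frac1{c_k}\|p_k-p_{k-1}\|^2,$$ $$\mathcal L_{c_k}(z_k;p_k)\le\mathcal L_{c_k}(z_{k-1};p_{k-1})-\Big(\frac{1-\sigma^2}{2\lambda}\Big)\|r_k\|^2+\frac1{c_k}\|p_k-p_{k-1}\|^2.$$
   Context: $\mathcal K\subseteq\mathbb{R}^\ell$ is a nonempty closed convex cone, $\mathcal K^*=\{y:\langle y,x\rangle\ge0\ \forall x\in\mathcal K\}$ its dual cone, $u\preceq_{\mathcal K}v$ means $v-u\in\mathcal K$, $\Pi_S$ is the Euclidean projection onto a closed convex set $S$, $\mathrm{dist}(y,S)$ the Euclidean distance. $\partial_\varepsilon\varphi(z):=\{u:\varphi(z')\ge\varphi(z)+\langle u,z'-z\rangle-\varepsilon\ \forall z'\}$, $\partial=\partial_0$. For differentiable $g:\mathbb{R}^n\to\mathbb{R}^\ell$, $\nabla g(z)\in\mathbb{R}^{n\times\ell}$ is the transpose of the Jacobian. $g$ is $\mathcal K$-convex if $g(tz'+(1-t)z)-tg(z')-(1-t)g(z)\preceq_{\mathcal K}0$ for all $z,z'$, $t\in[0,1]$. (B1) $h:\mathbb{R}^n\to(-\infty,\infty]$ proper lsc convex, $K_h$-Lipschitz on its domain; $\mathcal H:=\mathrm{dom}\,h$ compact with diameter $D_h$. (B2) $f$ differentiable on an open set containing $\mathcal H$;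 $m_f,L_f>0$ with $f(z')-f(z)-\langle\nabla f(z),z'-z\rangle\ge-\frac{m_f}{2}\|z'-z\|^2$ and $\|\nabla f(z')-\nabla f(z)\|\le L_f\|z'-z\|$ on $\mathcal H$. (B3) $g$ is $\mathcal K$-convex, differentiable, $\nabla g$ is $L_g$-Lipschitz on $\mathbb{R}^n$. (B4) there exist $\bar z\in\mathrm{int}\,\mathcal H$, $\tau\in(0,1]$ with $g(\bar z)\preceq_{\mathcal K}0$ and $\max\{\|\nabla g(z)p\|,|\langle p,g(\bar z)\rangle|\}\ge\tau\|p\|$ for all $z\in\mathcal H$, $p\in\mathcal K^*$. Constants: $B_f^{(1)}:=\sup_{\mathcal H}\|\nabla f\|$, $B_g^{(0)}:=\sup_{\mathcal H}\|g\|$, $B_g^{(1)}:=\sup_{\mathcal H}\|\nabla g\|$. Functions: $\phi=f+h$; $\mathcal L_c(z;p):=f(z)+h(z)+\frac1{2c}[\mathrm{dist}^2(p+cg(z),-\mathcal K)-\|p\|^2]$; $\widetilde{\mathcal L}_c(z;p):=\mathcal L_c(z;p)-h(z)$, with $\nabla_z\widetilde{\mathcal L}_c(z;p)=\nabla f(z)+\nabla g(z)\Pi_{\mathcal K^*}(p+cg(z))$; $\Lambda(c,p):=L_f+L_g\|p\|+c(B_g^{(0)}L_g+[B_g^{(1)}]^2)$. NL-IAPIAL method. Inputs: $\lambda\in(0,1/(2m_f)]$, $\sigma\in(0,1/\sqrt2]$, $c_1>0$, $(z_0,p_0)\in\mathcal H\times\mathbb{R}^\ell$, $(\hat\rho,\hat\eta)\in\mathbb{R}^2_{++}$.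 Set $\hat k=0$, $k=1$. Iteration $k$: (1) set $L^\psi_{k-1}:=\lambda\Lambda(c_k,p_{k-1})+1$, $\sigma_{k-1}:=\sigma/\sqrt{L^\psi_{k-1}}$, and obtain (by any procedure) $(z_k,v_k,\varepsilon_k)\in\mathbb{R}^n\times\mathbb{R}^n\times\mathbb{R}_+$ with $v_k\in\partial_{\varepsilon_k}(\lambda\mathcal L_{c_k}(\cdot;p_{k-1})+\frac12\|\cdot-z_{k-1}\|^2)(z_k)$ and $\|v_k\|^2+2\varepsilon_k\le\sigma_{k-1}^2\|v_k+z_{k-1}-z_k\|^2$. (2) Set $r_k:=v_k+z_{k-1}-z_k$, $\delta_k:=\varepsilon_k/\lambda$, $\hat z_k:=\mathrm{argmin}_u\{\lambda[\langle\nabla_z\widetilde{\mathcal L}_{c_k}(z_k;p_{k-1}),u-z_k\rangle+h(u)]-\langle r_k,u-z_k\rangle+\frac{L^\psi_{k-1}}2\|u-z_k\|^2\}$, $w_k:=\frac1\lambda[r_k+L^\psi_{k-1}(z_k-\hat z_k)]$, $\hat p_k:=\Pi_{\mathcal K^*}(p_{k-1}+c_kg(\hat z_k))$, $\hat q_k:=(p_{k-1}-\hat p_k)/c_k$, $\hat w_k:=w_k+\nabla_z\widetilde{\mathcal L}_{c_k}(\hat z_k;p_{k-1})-\nabla_z\widetilde{\mathcal L}_{c_k}(z_k;p_{k-1})$; if $\|\hat w_k\|\le\hat\rho$ and $\|\hat q_k\|\le\hat\eta$, stop. (3) $p_k:=\Pi_{\mathcal K^*}(p_{k-1}+c_kg(z_k))$.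 (4) If $k>\hat k+1$ and $\Delta_k:=\frac{1}{k-\hat k-1}[\mathcal L_{c_k}(z_{\hat k+1};p_{\hat k+1})-\mathcal L_{c_k}(z_k;p_k)]\le\frac{\lambda(1-\sigma^2)\hat\rho^2}{4(1+2\sigma)^2}$, set $c_{k+1}=2c_k$ and $\hat k=k$; otherwise $c_{k+1}=c_k$. (5) $k\leftarrow k+1$. *)

(* Defs.v *)
From HB Require Import structures.
From mathcomp Require Import all_boot all_order all_algebra.
From mathcomp Require Import all_classical all_reals all_analysis.
Set Implicit Arguments. Unset Strict Implicit. Unset Printing Implicit Defensive.
Import Order.TTheory GRing.Theory Num.Theory numFieldNormedType.Exports.
Local Open Scope classical_set_scope.
Local Open Scope ring_scope.

Section Defs.
Variable R : realType.

Definition dotv {n : nat} (u v : 'cV[R]_n) : R := (u^T *m v) 0 0.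
Definition norm2 {n : nat} (u : 'cV[R]_n) : R := Num.sqrt (dotv u u).

Definition opnorm {k m : nat} (M : 'M[R]_(k, m)) : R :=
  sup [set norm2 (M *m x) | x in [set x : 'cV[R]_m | norm2 x <= 1]].

Definition distv {n : nat} (y : 'cV[R]_n) (S : set 'cV[R]_n) : R :=
  inf [set norm2 (y - x) | x in S].

(* Euclidean projection onto S (the nearest point; well defined and unique
   for nonempty closed convex S). *)
Definition proj_set {n : nat} (S : set 'cV[R]_n) (y : 'cV[R]_n) : 'cV[R]_n :=
  xget 0 [set x | S x /\ forall z, S z -> norm2 (y - x) <= norm2 (y - z)].

Definition convex_setv {n : nat} (S : set 'cV[R]_n) : Prop :=
  forall x y (t : R), S x -> S y -> 0 <= t <= 1 -> S (t *: x + (1 - t) *: y).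

Definition closed_convex_cone {n : nat} (K : set 'cV[R]_n) : Prop :=
  K !=set0 /\ closed K /\ convex_setv K /\
  (forall (t : R) x, 0 <= t -> K x -> K (t *: x)).

Definition dual_cone {n : nat} (K : set 'cV[R]_n) : set 'cV[R]_n :=
  [set y | forall x, K x -> 0 <= dotv y x].

Definition neg_set {n : nat} (K : set 'cV[R]_n) : set 'cV[R]_n :=
  [set - x | x in K].

Definition cone_le {n : nat} (K : set 'cV[R]_n) (u v : 'cV[R]_n) : Prop := K (v - u).

Definition ext_on {n : nat} (D : set 'cV[R]_n) (phi : 'cV[R]_n -> R)
  (z : 'cV[R]_n) : \bar R := if `[< D z >] then (phi z)%:E else +oo%E.

(* eps-subdifferential of the extended-valued function (phi on D, +oo off D):
   v \in \partial_eps phi(z). Since D is nonempty this forces z \in D; for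
   z' outside D the defining inequality holds trivially (+oo >= ...). *)
Definition esubdiff {n : nat} (D : set 'cV[R]_n) (phi : 'cV[R]_n -> R)
  (eps : R) (z v : 'cV[R]_n) : Prop :=
  D z /\ forall z', D z' -> phi z' >= phi z + dotv v (z' - z) - eps.

Definition Lag {n l : nat} (K : set 'cV[R]_l) (f h : 'cV[R]_n -> R)
  (g : 'cV[R]_n -> 'cV[R]_l) (c : R) (z : 'cV[R]_n) (p : 'cV[R]_l) : R :=
  f z + h z + (2 * c)^-1 * ((distv (p + c *: g z) (neg_set K)) ^+ 2 - (norm2 p) ^+ 2).

End Defs.

(* Main.v *)
Require Import Defs.
From HB Require Import structures.
From mathcomp Require Import all_boot all_order all_algebra.
From mathcomp Require Import all_classical all_reals all_analysis.
From mathcomp Require Import ring lra.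
Import Order.TTheory GRing.Theory Num.Theory numFieldNormedType.Exports.
Local Open Scope classical_set_scope.
Local Open Scope ring_scope.

Section Aux.
Context {R : realType} {l : nat}.
Implicit Types u v w : 'cV[R]_l.

Lemma dotvE u v : dotv u v = \sum_i u i 0 * v i 0.
Proof. by rewrite /dotv mxE; apply: eq_bigr => i _; rewrite mxE. Qed.

Lemma dotvC u v : dotv u v = dotv v u.
Proof. by rewrite !dotvE; apply: eq_bigr => i _; rewrite mulrC. Qed.

Lemma dotvDl u w v : dotv (u + w) v = dotv u v + dotv w v.
Proof. by rewrite !dotvE -big_split; apply: eq_bigr => i _; rewrite mxE mulrDl. Qed.

Lemma dotvDr u w v : dotv v (u + w) = dotv v u + dotv v w.
Proof. by rewrite dotvC dotvDl !(dotvC v). Qed.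

Lemma dotvZl (a : R) u v : dotv (a *: u) v = a * dotv u v.
Proof. by rewrite !dotvE mulr_sumr; apply: eq_bigr => i _; rewrite mxE mulrA. Qed.

Lemma dotvZr (a : R) u v : dotv v (a *: u) = a * dotv v u.
Proof. by rewrite dotvC dotvZl dotvC. Qed.

Lemma dotvNl u v : dotv (- u) v = - dotv u v.
Proof. by rewrite -scaleN1r dotvZl mulN1r. Qed.

Lemma dotvNr u v : dotv v (- u) = - dotv v u.
Proof. by rewrite dotvC dotvNl dotvC. Qed.

Lemma dotvBl u w v : dotv (u - w) v = dotv u v - dotv w v.
Proof. by rewrite dotvDl dotvNl. Qed.

Lemma dotvBr u w v : dotv v (u - w) = dotv v u - dotv v w.
Proof. by rewrite dotvDr dotvNr. Qed.

Lemma dotv_ge0 u : 0 <= dotv u u.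
Proof. by rewrite dotvE; apply: sumr_ge0 => i _; rewrite -expr2 sqr_ge0. Qed.

Lemma norm2_ge0 u : 0 <= norm2 u.
Proof. exact: sqrtr_ge0. Qed.

Lemma norm2_sq u : norm2 u ^+ 2 = dotv u u.
Proof. by rewrite /norm2 sqr_sqrtr // dotv_ge0. Qed.

Lemma norm2_le u v : dotv u u <= dotv v v -> norm2 u <= norm2 v.
Proof. by move=> h; rewrite /norm2 ler_sqrt // dotv_ge0. Qed.

Lemma norm2_leE u v : norm2 u <= norm2 v -> dotv u u <= dotv v v.
Proof. by rewrite /norm2 ler_sqrt ?dotv_ge0. Qed.

Lemma dotv_eq0 u : dotv u u = 0 -> u = 0.
Proof.
rewrite dotvE => /eqP; rewrite psumr_eq0; last by move=> i _; rewrite -expr2 sqr_ge0.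
move=> /allP h; apply/matrixP => i j; rewrite (ord1 j) mxE.
by have /(_ (mem_index_enum i))/implyP/(_ isT) := h i; rewrite mulf_eq0 orbb => /eqP.
Qed.

End Aux.
Arguments norm2_le {R l u v}.
Arguments norm2_leE {R l u v}.
Arguments dotv_eq0 {R l u}.
Section Top.
Context {R : realType} {l : nat}.

Lemma trmx_cont : continuous (fun v : 'rV[R]_l => v^T).
Proof.
move=> v; apply/(@cvgrPdist_lt _ _ _ (nbhs v)) => e e0.
near=> w.
have hw : `|v - w| < e by near: w; exact: cvgr_dist_lt.
apply: le_lt_trans hw.
rewrite -linearB /=.
rewrite [leLHS]/Num.Def.normr/= mx_normrE.
apply: bigmax_le => //= -[i j] _.
rewrite mxE.
rewrite [leRHS]/Num.Def.normr/= mx_normrE.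
exact: (le_bigmax _ _ (j, i)).
Unshelve. all: by end_near. Qed.

Lemma contQ (y : 'cV[R]_l) : continuous (fun u : 'cV[R]_l => dotv (y + u) (y + u)).
Proof.
have -> : (fun u : 'cV[R]_l => dotv (y + u) (y + u)) =
   (fun u => \sum_(i < l) (y i 0 + u i 0) * (y i 0 + u i 0)).
  apply: funext => u; rewrite /dotv mxE; apply: eq_bigr => i _; rewrite !mxE.
  by [].
apply: continuous_big => [|i _]; first exact: add_continuous.
have hc : continuous (fun u : 'cV[R]_l => y i 0 + u i 0).
  move=> u; apply: (@cvgD _ _ _ (nbhs u)); [exact: cvg_cst | exact: coord_continuous].
move=> u; exact: (@cvgM _ _ (nbhs u) _ _ _ _ _ (hc u) (hc u)).
Qed.
End Top.
Section Ex.
Context {R : realType} {l : nat}.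

Lemma term_le (y u : 'cV[R]_l) i : (y i 0 + u i 0) * (y i 0 + u i 0) <= dotv (y + u) (y + u).
Proof.
rewrite dotvE (bigD1 i) //= !mxE ler_wpDr //.
by apply: sumr_ge0 => j _; rewrite !mxE -expr2 sqr_ge0.
Qed.

Lemma exmin (K : set 'cV[R]_l) (y : 'cV[R]_l) : closed K -> K !=set0 ->
  exists u0, K u0 /\ forall u, K u -> dotv (y + u0) (y + u0) <= dotv (y + u) (y + u).
Proof.
move=> clK [x0 Kx0].
pose Q := fun u : 'cV[R]_l => dotv (y + u) (y + u).
pose M := Q x0.
pose S := K `&` (Q @^-1` [set x | x <= M]).
have clS : closed S.
  apply: closedI => //; have := proj1 (continuous_closedP Q) (@contQ R l y) _ (@closed_le R M). by [].
pose C := fun i : 'I_l => 1 + M + `|y i 0|.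
pose B := [set v : 'rV[R]_l | forall i, (`[- C i, C i])%classic (v ord0 i)].
have cB : compact B by exact: (@rV_compact R l (fun i => (`[- C i, C i])%classic) (fun i => @segment_compact R _ _)).
have cS : compact S.
  apply: (subclosed_compact clS (continuous_compact (continuous_subspaceT (@trmx_cont R l)) cB)).
  move=> u [Ku Qu]; exists u^T; last by rewrite trmxK.
  move=> i; rewrite /= in_itv /= mxE.
  have h1 := term_le y u i.
  have hM : 0 <= M by exact: dotv_ge0.
  set a := y i 0 + u i 0 in h1.
  have ha : `|a| <= 1 + M.
    have : `|a| <= 1 + a * a.
      by case: (lerP 0 a) => ha; [rewrite ger0_norm // | rewrite ltr0_norm //]; nra.
    move=> h; apply: (le_trans h); rewrite lerD2l; exact: (le_trans h1).
  have : `|u i 0| <= 1 + M + `|y i 0|.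
    have -> : u i 0 = a - y i 0 by rewrite /a; ring.
    by apply: (le_trans (ler_normB _ _)); rewrite lerD2r.
  by rewrite ler_norml /C => /andP[-> ->].
have S0 : S !=set0 by exists x0; split => //; rewrite /= /M.
have [c cS' cmin] := compact_EVT_min S0 cS (continuous_subspaceT (@contQ R l y)).
move: cS'; rewrite inE => -[Kc Qc].
exists c; split => // u Ku.
case: (lerP (Q u) M) => hu.
  by apply: (cmin u); rewrite inE.
exact: (le_trans Qc (ltW hu)).
Qed.
End Ex.
Section Proj.
Context {R : realType} {l : nat}.
Implicit Types a b u w y : 'cV[R]_l.

Lemma dot_exp a b (t : R) :
  dotv (a + t *: b) (a + t *: b) = dotv a a + 2 * t * dotv a b + t ^+ 2 * dotv b b.
Proof. rewrite !(dotvDl, dotvDr, dotvZl, dotvZr) (dotvC b a); ring. Qed.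

Lemma aux_nonneg {X Y : R} : 0 <= Y ->
  (forall t, 0 <= t <= 1 -> 0 <= 2 * t * X + t ^+ 2 * Y) -> 0 <= X.
Proof.
move=> hY h; case: (lerP 0 X) => // hX.
pose t := - X / (Y - X + 1).
have hd : 0 < Y - X + 1 by lra.
have ht0 : 0 < t by rewrite /t divr_gt0 // oppr_gt0.
have ht1 : t <= 1 by rewrite /t ler_pdivrMr // mul1r; lra.
have := h t; rewrite ltW //= ht1 => /(_ isT).
have htY : t * Y <= - X.
  rewrite /t mulrAC ler_pdivrMr //; nra.
nra.
Qed.

Variable K : set 'cV[R]_l.
Hypothesis hK : closed_convex_cone K.

Lemma K_add {x w} : K x -> K w -> K (x + w).
Proof.
case: hK => _ [_ [cv sc]] Kx Kw.
have h2 : (0 : R) <= 2 by [].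
have := cv _ _ (2^-1) (sc _ _ h2 Kx) (sc _ _ h2 Kw).
have -> : (1 - 2^-1 : R) = 2^-1 by field.
rewrite !scalerA mulVf ?scale1r //; apply; apply/andP; split.
  by rewrite invr_ge0.
by rewrite invf_le1 // ler1n.
Qed.


Lemma proj_facts y : let b := proj_set (dual_cone K) y in
  dual_cone K b /\ K (b - y) /\ dotv (y - b) b = 0.
Proof.
have [K0 [clK [_ sc]]] := hK.
have [u0 [Ku0 hmin]] := @exmin R l K y clK K0.
pose q0 := y + u0.
have var : forall u, K u -> 0 <= dotv q0 u.
  move=> u Ku; apply: (aux_nonneg (dotv_ge0 u)) => t /andP[t0 t1].
  have := hmin _ (K_add Ku0 (sc _ _ t0 Ku)).
  rewrite addrA dot_exp -/q0; lra.
have orth : dotv q0 u0 = 0.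
  apply/eqP; rewrite eq_le var // andbT -oppr_ge0 -dotvNr.
  apply: (aux_nonneg (dotv_ge0 (- u0))) => t /andP[t0 t1].
  have h1t : 0 <= 1 - t by lra.
  have := hmin _ (sc _ _ h1t Ku0).
  have -> : y + (1 - t) *: u0 = q0 + t *: - u0.
    by rewrite /q0 scalerBl scale1r scalerN addrA.
  rewrite dot_exp !dotvNl !dotvNr opprK -/q0; lra.
have q0K : dual_cone K q0 by move=> x Kx; exact: var.
have q0min : forall q, dual_cone K q -> norm2 (y - q0) <= norm2 (y - q).
  move=> q Kq; apply: norm2_le.
  have -> : y - q = (y - q0) + 1 *: (q0 - q) by rewrite scale1r /q0; rewrite addrA subrK.
  rewrite dot_exp.
  have -> : y - q0 = - u0 by rewrite /q0 opprD addrA subrr add0r.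
  have := Kq _ Ku0; have := dotv_ge0 (q0 - q).
  rewrite !dotvNl !dotvBr (dotvC u0 q0) (dotvC u0 q) orth; lra.
set b := proj_set _ y.
have [Kb bmin] : dual_cone K b /\ forall z, dual_cone K z -> norm2 (y - b) <= norm2 (y - z).
  exact: (xgetI (P := [set x | dual_cone K x /\ forall z, dual_cone K z -> norm2 (y - x) <= norm2 (y - z)]) 0 (conj q0K q0min)).
have bq : b = q0.
  pose m := 2^-1 *: b + 2^-1 *: q0.
  have Km : dual_cone K m.
    move=> x Kx; rewrite dotvDl !dotvZl.
    have := Kb _ Kx; have := q0K _ Kx; have : (0 : R) <= 2^-1 by rewrite invr_ge0.
    nra.
  have h1 := norm2_leE (bmin _ q0K).
  have h2 := norm2_leE (q0min _ Kb).
  have h3 := norm2_leE (bmin _ Km).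
  have e3 : y - m = (y - b) + 2^-1 *: (b - q0).
    by rewrite /m; apply/matrixP => i j; rewrite !mxE; field.
  rewrite e3 dot_exp in h3.
  have e4 : y - q0 = (y - b) + 1 *: (b - q0) by rewrite scale1r addrA subrK.
  rewrite e4 dot_exp in h2 h1.
  have hd := dotv_ge0 (b - q0).
  have : dotv (b - q0) (b - q0) = 0.
    have hh : (2^-1 : R) ^+ 2 = 4^-1 by field.
    have h22 : (2 : R) / 2 = 1 by field.
    rewrite hh h22 in h3.
    rewrite expr1n !mulr1 mul1r in h1 h2.
    have h4 : (0:R) < 4^-1 by rewrite invr_gt0.
    have h5 : (4:R)^-1 * 4 = 1 by field.
    nra.
  by move/dotv_eq0/eqP; rewrite subr_eq0 => /eqP.
rewrite bq; split => //; split.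
  by rewrite /q0 addrC addKr.
have -> : y - q0 = - u0 by rewrite /q0 opprD addrA subrr add0r.
by rewrite dotvNl dotvC orth oppr0.
Qed.

Lemma dist_facts w : (neg_set K) !=set0 ->
  let E := [set norm2 (w - x) | x in neg_set K] in
  0 <= distv w (neg_set K) /\ forall x, neg_set K x -> distv w (neg_set K) <= norm2 (w - x).
Proof.
move=> [x0 hx0] E.
have lb0 : lbound E 0 by move=> _ [x _ <-]; exact: norm2_ge0.
have hlb : has_lbound E by exists 0.
split; first by apply: lb_le_inf => //; exists (norm2 (w - x0)), x0.
by move=> x hx; apply: ge_inf => //; exists x.
Qed.

Lemma part1 (a g0 : 'cV[R]_l) (c : R) : 0 < c ->
  let b := proj_set (dual_cone K) (a + c *: g0) in
  (2 * c)^-1 * (distv (b + c *: g0) (neg_set K) ^+ 2 - norm2 b ^+ 2)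
   <= (2 * c)^-1 * (distv (a + c *: g0) (neg_set K) ^+ 2 - norm2 a ^+ 2)
      + c^-1 * norm2 (b - a) ^+ 2.
Proof.
move=> c0 /=; set b := proj_set (dual_cone K) (a + c *: g0).
set y := a + c *: g0.
have [Kb [Kby orth]] := proj_facts y.
rewrite -/b in Kb Kby orth.
have [K0 _] := hK.
have nK0 : neg_set K !=set0 by case: K0 => x Kx; exists (- x), x.
have [D1ge0 D1le] := dist_facts (b + c *: g0) nK0.
have [D2ge0 D2le] := dist_facts y nK0.
set D1 := distv (b + c *: g0) (neg_set K) in D1ge0 D1le *.
set D2 := distv y (neg_set K) in D2ge0 D2le *.
have h1 : D1 <= norm2 (b + 1 *: (b - a)).
  have -> : b + 1 *: (b - a) = b + c *: g0 - - (b - y).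
    by rewrite scale1r /y opprK; apply/matrixP => i j; rewrite !mxE; ring.
  by apply: D1le; exists (b - y).
have h2 : norm2 b <= D2.
  apply: lb_le_inf; first by case: nK0 => x hx; exists (norm2 (y - x)), x.
  move=> _ [x [u Ku <-] <-]; apply: norm2_le.
  have -> : y - - u = b + 1 *: (y - b + u).
    by rewrite scale1r opprK; apply/matrixP => i j; rewrite !mxE; ring.
  rewrite dot_exp dotvDr (dotvC b (y - b)) orth.
  have := Kb _ Ku; have := dotv_ge0 (y - b + u); lra.
have hn1 := norm2_ge0 (b + 1 *: (b - a)).
have hb := norm2_ge0 b.
have s1 : D1 ^+ 2 <= norm2 (b + 1 *: (b - a)) ^+ 2 by rewrite !expr2; nra.
have s2 : norm2 b ^+ 2 <= D2 ^+ 2 by rewrite !expr2; nra.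
rewrite !norm2_sq dot_exp in s1 s2 *.
have ci : 0 < (2 * c)^-1 by rewrite invr_gt0 mulr_gt0.
have e : c^-1 = (2 * c)^-1 * 2 by rewrite invfM mulrAC mulVf // mul1r.
rewrite e.
have ex : dotv b (b - a) = dotv b b - dotv a b by rewrite dotvBr (dotvC b a).
have ex2 : dotv (b - a) (b - a) = dotv b b - 2 * dotv a b + dotv a a.
  by rewrite !(dotvBl, dotvBr) (dotvC b a); ring.
rewrite ex ex2 in s1 *.
rewrite expr1n !mul1r mulr1 in s1.
nra.
Qed.
End Proj.

Lemma sup_nonneg {R : realType} (S : set R) : (forall x, S x -> 0 <= x) -> 0 <= sup S.
Proof.
move=> h; case: (pselect (has_sup S)) => hs.
  have [[x Sx] _] := hs; apply: le_trans (h x Sx) _; exact: sup_upper_bound.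
by rewrite sup_out.
Qed.

Lemma dotv00 {R : realType} {l : nat} : dotv (0 : 'cV[R]_l) 0 = 0.
Proof. by rewrite dotvE big1 // => i _; rewrite mxE mul0r. Qed.
Theorem lemma4p5
  (R : realType) (n l : nat)
  (K : set 'cV[R]_l)
  (h f : 'cV[R]_n -> R) (H : set 'cV[R]_n)
  (g : 'cV[R]_n -> 'cV[R]_l)
  (df : 'cV[R]_n -> 'cV[R]_n) (dg : 'cV[R]_n -> 'M[R]_(n, l))
  (K_h m_f L_f L_g : R)
  (* the cone *)
  (hK : closed_convex_cone K)
  (* (B1) *)
  (hH0 : H !=set0) (hHc : compact H) (hHconv : convex_setv H)
  (hhconv : forall x y (t : R), H x -> H y -> 0 <= t <= 1 ->
      h (t *: x + (1 - t) *: y) <= t * h x + (1 - t) * h y)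
  (hhlsc : lower_semicontinuous (ext_on H h))
  (hKh : 0 <= K_h)
  (hhlip : forall x y, H x -> H y -> `|h x - h y| <= K_h * norm2 (x - y))
  (* (B2) *)
  (hfdiff : exists2 U : set 'cV[R]_n, open U & H `<=` U /\
      forall z, U z -> differentiable f z /\ forall u, 'd f z u = dotv (df z) u)
  (hmf : 0 < m_f) (hLf : 0 < L_f)
  (hfwc : forall z z', H z -> H z' ->
      f z' - f z - dotv (df z) (z' - z) >= - (m_f / 2) * (norm2 (z' - z)) ^+ 2)
  (hflip : forall z z', H z -> H z' -> norm2 (df z' - df z) <= L_f * norm2 (z' - z))
  (* (B3) *)
  (hgconv : forall z z' (t : R), 0 <= t <= 1 ->
      cone_le K (g (t *: z' + (1 - t) *: z)) (t *: g z' + (1 - t) *: g z))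
  (hgdiff : forall z, differentiable g z /\ forall u, 'd g z u = (dg z)^T *m u)
  (hLg : 0 <= L_g)
  (hglip : forall z z', opnorm (dg z' - dg z) <= L_g * norm2 (z' - z))
  (* method parameters *)
  (lambda sigma : R)
  (hlam : 0 < lambda <= (2 * m_f)^-1)
  (hsig : 0 < sigma <= (Num.sqrt 2)^-1)
  (* iterates of NL-IAPIAL *)
  (z v : nat -> 'cV[R]_n) (eps : nat -> R) (p : nat -> 'cV[R]_l) (c : nat -> R)
  (k : nat) (hk : (1 <= k)%N)
  (hz0 : H (z 0%N))
  (hc1 : 0 < c 1%N)
  (hcupd : forall j, (1 <= j)%N -> c j.+1 = c j \/ c j.+1 = 2 * c j)
  (* step (1) at every iteration j = 1..k *)
  (hstep1 : forall j, (1 <= j <= k)%N ->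
      let Bg0 := sup [set norm2 (g x) | x in H] in
      let Bg1 := sup [set opnorm (dg x) | x in H] in
      let Lam := L_f + L_g * norm2 (p j.-1) + c j * (Bg0 * L_g + Bg1 ^+ 2) in
      let Lpsi := lambda * Lam + 1 in
      let sig := sigma / Num.sqrt Lpsi in
      0 <= eps j /\
      esubdiff H (fun u => lambda * Lag K f h g (c j) u (p j.-1)
                           + 2^-1 * (norm2 (u - z j.-1)) ^+ 2)
               (eps j) (z j) (v j) /\
      (norm2 (v j)) ^+ 2 + 2 * eps j <= sig ^+ 2 * (norm2 (v j + z j.-1 - z j)) ^+ 2)
  (* step (3) at every iteration j = 1..k *)
  (hstep3 : forall j, (1 <= j <= k)%N ->
      p j = proj_set (dual_cone K) (p j.-1 + c j *: g (z j))) :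
  let r := v k + z k.-1 - z k in
  Lag K f h g (c k) (z k) (p k)
    <= Lag K f h g (c k) (z k) (p k.-1) + (c k)^-1 * (norm2 (p k - p k.-1)) ^+ 2 /\
  Lag K f h g (c k) (z k) (p k)
    <= Lag K f h g (c k) (z k.-1) (p k.-1)
       - ((1 - sigma ^+ 2) / (2 * lambda)) * (norm2 r) ^+ 2
       + (c k)^-1 * (norm2 (p k - p k.-1)) ^+ 2.
Proof.
Proof.
move: hk hstep1 hstep3; case: k => [//|k] hk hstep1 hstep3 r.
rewrite /= in r *.
have cpos : forall j, (1 <= j)%N -> 0 < c j.
  elim=> [//|j IH] hj; case: j IH hj => [_ _|j IH _]; first exact: hc1.
  have cj := IH isT.
  by case: (hcupd j.+1 isT) => ->; rewrite ?mulr_gt0.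
have ck := cpos k.+1 isT.
have hk' : (1 <= k.+1 <= k.+1)%N by rewrite leqnn.
have pk := hstep3 k.+1 hk'; rewrite /= in pk.
have P1 : Lag K f h g (c k.+1) (z k.+1) (p k.+1)
    <= Lag K f h g (c k.+1) (z k.+1) (p k) + (c k.+1)^-1 * norm2 (p k.+1 - p k) ^+ 2.
  have := @part1 R l K hK (p k) (g (z k.+1)) (c k.+1) ck.
  rewrite /= -pk /Lag; lra.
split => //.
have Hzk1 : H (z k).
  case: (posnP k) => [->|kpos]; first exact: hz0.
  have := hstep1 k; rewrite kpos leqnSn /= => /(_ isT); cbv zeta.
  by case=> _ [[]].
have := hstep1 k.+1 hk'; cbv zeta; rewrite /=.
move=> [eps0 [[Hzk sub] vb]].
have := sub (z k) Hzk1; rewrite /= subrr (norm2_sq 0) dotv00 mulr0 addr0.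
set s := z k - z k.+1.
have es : z k.+1 - z k = - s by rewrite /s opprB.
rewrite es norm2_sq dotvNl dotvNr opprK => hsub.
have er : v k.+1 + z k - z k.+1 = v k.+1 + 1 *: s by rewrite scale1r /s addrA.
rewrite /r er !norm2_sq dot_exp in vb *.
set Bg0 := sup [set norm2 (g x) | x in H] in vb.
set Bg1 := sup [set opnorm (dg x) | x in H] in vb.
set Lpsi := lambda * _ + 1 in vb.
have hB0 : 0 <= Bg0 by apply: sup_nonneg => _ [x _ <-]; exact: norm2_ge0.
have lam0 : 0 < lambda by case/andP: hlam.
have Lps1 : 1 <= Lpsi.
  rewrite /Lpsi lerDr; apply: mulr_ge0; first exact: ltW.
  apply: addr_ge0; first apply: addr_ge0; first exact: ltW.
    by apply: mulr_ge0 => //; exact: norm2_ge0.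
  apply: mulr_ge0; first exact: ltW.
  by apply: addr_ge0; [exact: mulr_ge0 | exact: sqr_ge0].
have sig2 : (sigma / Num.sqrt Lpsi) ^+ 2 <= sigma ^+ 2.
  have Lp0 : 0 < Lpsi by lra.
  rewrite expr_div_n sqr_sqrtr; last exact: ltW.
  rewrite ler_pdivrMr //.
  have := sqr_ge0 sigma; nra.
set V := dotv (v k.+1) (v k.+1) in vb hsub *.
set W := dotv (v k.+1) s in vb hsub *.
set S2 := dotv s s in vb hsub *.
have hX : 0 <= V + 2 * 1 * W + 1 ^+ 2 * S2.
  rewrite -dot_exp; exact: dotv_ge0.
have vb2 : V + 2 * eps k.+1 <= sigma ^+ 2 * (V + 2 * 1 * W + 1 ^+ 2 * S2).
  apply: (le_trans vb); apply: ler_wpM2r => //.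
rewrite expr1n !mulr1 mul1r in hX vb2 *.
set L1 := Lag K f h g (c k.+1) (z k) (p k) in hsub *.
set L2 := Lag K f h g (c k.+1) (z k.+1) (p k) in hsub P1 *.
have key : lambda * L2 <= lambda * L1 - (1 - sigma ^+ 2) / 2 * (V + 2 * W + S2).
  have e2 : (2:R)^-1 * 2 = 1 by field.
  nra.
have key2 : L2 <= L1 - (1 - sigma ^+ 2) / (2 * lambda) * (V + 2 * W + S2).
  rewrite -(ler_pM2l lam0) mulrBr.
  have -> : lambda * ((1 - sigma ^+ 2) / (2 * lambda) * (V + 2 * W + S2))
      = (1 - sigma ^+ 2) / 2 * (V + 2 * W + S2) by field; rewrite gt_eqF.
  exact: key.
rewrite norm2_sq in P1.
lra.
Qed.
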